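(* Let $X$ be a set and let $A$ and $B$ be Banach algebras of complex-valued functions on $X$ (with pointwise operations), each containing the constant functions on $X$. Let $\psi:A\to B$ be a continuous algebra homomorphism and $\varphi\in\Delta(B)$. If $f\in A$ satisfies $P(f)=0$ for some nonzero polynomial $P$ in one complex variable, then $D(f)=0$ for every $(\varphi,\psi)$-point derivation $D$ on $A$.
   Context: $\Delta(B)$ denotes the set of all nonzero multiplicative linear functionals on $B$. A bounded linear functional $D$ on $A$ is a $(\varphi,\psi)$-point derivation if $D(ab)=\varphi(\psi(a))\,D(b)+\varphi(\psi(b))\,D(a)$ for all $a,b\in A$. For $P(z)=\sum_{k=0}^{n}c_kz^k$, $P(f)=\sum_{k=0}^n c_k f^k$ with $f^0$ the constant function $1$. *)

(* Defs.v *)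
From mathcomp Require Import all_boot all_order all_algebra.
From mathcomp Require Import complex.
From mathcomp Require Import reals.
Set Implicit Arguments. Unset Strict Implicit. Unset Printing Implicit Defensive.
Import Order.TTheory GRing.Theory Num.Theory.
Local Open Scope ring_scope.
Local Open Scope complex_scope.

Section Defs.
Variable (R : realType) (X : Type).
Local Notation C := R[i].
Local Notation F := (X -> C).

Record funBanachAlg := FunBanachAlg {
  inA : F -> Prop;
  anrm : F -> R;
  mem_cst : forall c : C, inA (fun _ => c);
  mem_add : forall f g, inA f -> inA g -> inA (fun x => f x + g x);
  mem_scale : forall (c : C) f, inA f -> inA (fun x => c * f x);
  mem_mul : forall f g, inA f -> inA g -> inA (fun x => f x * g x);
  nrm_ge0 : forall f, inA f -> 0 <= anrm f;
  nrm_eq0 : forall f, inA f -> anrm f = 0 -> f = (fun _ => 0);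
  nrm_add : forall f g, inA f -> inA g -> anrm (fun x => f x + g x) <= anrm f + anrm g;
  nrm_scale : forall (c : C) f, inA f ->
      anrm (fun x => c * f x) = complex.Re `|c| * anrm f;
  nrm_mul : forall f g, inA f -> inA g -> anrm (fun x => f x * g x) <= anrm f * anrm g;
  complete : forall u : nat -> F, (forall n, inA (u n)) ->
    (forall e : R, 0 < e -> exists N, forall m n, (N <= m)%N -> (N <= n)%N ->
        anrm (fun x => u m x - u n x) < e) ->
    exists2 l, inA l & forall e : R, 0 < e -> exists N, forall n, (N <= n)%N ->
        anrm (fun x => u n x - l x) < e
}.

Definition cont_alg_hom (A B : funBanachAlg) (psi : F -> F) : Prop :=
  [/\ forall f, inA A f -> inA B (psi f),
      forall f g, inA A f -> inA A g -> psi (fun x => f x + g x) = (fun x => psi f x + psi g x),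
      forall (c : C) f, inA A f -> psi (fun x => c * f x) = (fun x => c * psi f x),
      forall f g, inA A f -> inA A g -> psi (fun x => f x * g x) = (fun x => psi f x * psi g x)
    & forall f, inA A f -> forall e : R, 0 < e -> exists2 d : R, 0 < d &
        forall g, inA A g -> anrm A (fun x => g x - f x) < d ->
          anrm B (fun x => psi g x - psi f x) < e].

Definition in_Delta (B : funBanachAlg) (phi : F -> C) : Prop :=
  [/\ forall f g, inA B f -> inA B g -> phi (fun x => f x + g x) = phi f + phi g,
      forall (c : C) f, inA B f -> phi (fun x => c * f x) = c * phi f,
      forall f g, inA B f -> inA B g -> phi (fun x => f x * g x) = phi f * phi g
    & exists2 f, inA B f & phi f != 0].

Definition point_derivation (A : funBanachAlg) (phi : F -> C) (psi : F -> F)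
    (D : F -> C) : Prop :=
  [/\ forall f g, inA A f -> inA A g -> D (fun x => f x + g x) = D f + D g,
      forall (c : C) f, inA A f -> D (fun x => c * f x) = c * D f,
      exists M : R, forall f, inA A f -> complex.Re `|D f| <= M * anrm A f
    & forall f g, inA A f -> inA A g ->
        D (fun x => f x * g x) = phi (psi f) * D g + phi (psi g) * D f].

Definition poly_app (P : {poly C}) (f : F) : F :=
  fun x => \sum_(k < size P) P`_k * f x ^+ k.

End Defs.

Arguments cont_alg_hom {R X} A B psi.
Arguments in_Delta {R X} B phi.
Arguments point_derivation {R X} A phi psi D.

(* Main.v *)
Require Import Defs.
From mathcomp Require Import all_boot all_order all_algebra.
From mathcomp Require Import complex.
From mathcomp Require Import reals.
From Stdlib Require Import FunctionalExtensionality.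
From mathcomp Require Import ring.
Import GRing.Theory Num.Theory.
Local Open Scope ring_scope.
Local Open Scope complex_scope.

Theorem proposition2p5 (R : realType) (X : Type) (A B : funBanachAlg R X)
  (psi : (X -> R[i]) -> (X -> R[i])) (phi : (X -> R[i]) -> R[i])
  (f : X -> R[i]) (P : {poly R[i]}) :
  cont_alg_hom A B psi -> in_Delta B phi -> inA A f ->
  P != 0 -> poly_app P f = (fun _ => 0) ->
  forall D : (X -> R[i]) -> R[i], point_derivation A phi psi D -> D f = 0.
Proof.
move=> [psiB psiD psiZ psiM _] [phiD phiZ phiM _] Af Pn0 Pf D [DD DZ _ DM].
pose e : X -> R[i] := fun _ => 1.
have Ae : inA A e by apply: mem_cst.
have ee : (fun x => e x * e x) = e by apply: functional_extensionality => x; rewrite /e mulr1.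
pose u := phi (psi e).
have uu : u * u = u.
  have h := psiM _ _ Ae Ae; rewrite ee in h.
  by rewrite /u -phiM; [rewrite [in RHS]h | exact: psiB | exact: psiB].
have gE : forall g : X -> R[i], (fun x => g x * e x) = g.
  by move=> g; apply: functional_extensionality => x; rewrite /e mulr1.
have pg : forall g, inA A g -> phi (psi g) = phi (psi g) * u.
  move=> g Ag; have h := psiM _ _ Ag Ae; rewrite gE in h.
  by rewrite {1}h phiM; [|exact: psiB|exact: psiB].
have [u0|u1] : u = 0 \/ u = 1.
  have : u * (u - 1) = 0 by rewrite mulrBr mulr1 uu subrr.
  by move/eqP; rewrite mulf_eq0 subr_eq0 => /orP[] /eqP; [left|right].
  have z : forall g, inA A g -> phi (psi g) = 0.
    by move=> g Ag; rewrite pg // u0 mulr0.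
  have h := DM _ _ Af Ae; rewrite gE in h.
  by rewrite h !z // !mul0r addr0.
have u1' : phi (psi e) = 1 by exact: u1.
have De : D e = 0.
  have h := DM _ _ Ae Ae; rewrite ee in h. rewrite u1' !mul1r in h.
  apply: (addrI (D e)); by rewrite addr0 -h.
have cE : forall c : R[i], (fun _ : X => c) = (fun x => c * e x).
  by move=> c; apply: functional_extensionality => x; rewrite /e mulr1.
have Dc : forall c : R[i], D (fun _ => c) = 0.
  by move=> c; rewrite cE DZ // De mulr0.
have pc : forall c : R[i], phi (psi (fun _ => c)) = c.
  move=> c; rewrite cE psiZ // phiZ; last exact: psiB.
  by rewrite u1' mulr1.
pose lam := phi (psi f).
have hornE : forall (Q : {poly R[i]}) c,
  (fun x => (Q * 'X + c%:P).[f x]) = (fun x => (fun y => Q.[f y]) x * f x + (fun _ => c) x).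
  by move=> Q c; apply: functional_extensionality => x; rewrite hornerMXaddC.
have polyA : forall Q : {poly R[i]}, inA A (fun x => Q.[f x]).
  elim/poly_ind => [|Q c IH].
    by rewrite (_ : (fun x => _) = (fun _ => 0)); [apply: mem_cst|
       apply: functional_extensionality => x; rewrite horner0].
  rewrite hornE; exact: (mem_add (mem_mul IH Af) (mem_cst _ c)).
have polyP : forall Q : {poly R[i]}, phi (psi (fun x => Q.[f x])) = Q.[lam].
  elim/poly_ind => [|Q c IH].
    by rewrite (_ : (fun x => _) = (fun _ => 0)); [rewrite pc horner0|
       apply: functional_extensionality => x; rewrite horner0].
  have AQ := polyA Q; have AQf := mem_mul AQ Af; have Ac := mem_cst A c.
  rewrite hornE (psiD _ _ AQf Ac) (phiD _ _ (psiB _ AQf) (psiB _ Ac)).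
  rewrite (psiM _ _ AQ Af) (phiM _ _ (psiB _ AQ) (psiB _ Af)) pc IH.
  by rewrite hornerMXaddC.
have [m [Q Qr PE]] := multiplicity_XsubC P lam.
rewrite Pn0 /= in Qr.
pose R1 := 'X - lam%:P.
have Pz : forall x, P.[f x] = 0.
  by move=> x; have := congr1 (fun g => g x) Pf; rewrite /= /poly_app -horner_coef.
have Hz : (fun x => R1.[f x] * Q.[f x]) = (fun _ => 0).
  apply: functional_extensionality => x.
  apply/eqP; suff : (R1.[f x] * Q.[f x]) ^+ m.+1 == 0 by rewrite expf_eq0.
  apply/eqP; have -> : (R1.[f x] * Q.[f x]) ^+ m.+1 = P.[f x] * (R1.[f x] * Q.[f x] ^+ m).
    by rewrite PE hornerM horner_exp exprMn !exprS; ring.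
  by rewrite Pz mul0r.
have R1E : (fun x => R1.[f x]) = (fun x => f x + (fun _ => - lam) x).
  by apply: functional_extensionality => x; rewrite /R1 hornerXsubC.
have DR1 : D (fun x => R1.[f x]) = D f.
  by rewrite R1E (DD _ _ Af (mem_cst A (- lam))) Dc addr0.
have := DM _ _ (polyA R1) (polyA Q).
rewrite Hz Dc DR1 !polyP /R1 hornerXsubC subrr mul0r add0r => /esym/eqP.
by rewrite mulf_eq0 => /orP[/eqP h|/eqP //]; move: Qr; rewrite /root h eqxx.
Qed.
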